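(* Let $K$ be a field of characteristic zero, $L$ a $K$-linear functional on $K[u]$ with moments $\mu_s=L(u^s)$, and assume that all Hankel determinants $H(n)=\det_{0\le i,j\le n-1}(\mu_{i+j})$, $n\ge0$, are non-zero. Let $k,m,n$ be non-negative integers and $x_1,\dots,x_m,y_1,\dots,y_k$ variables. Then the determinant $$\det_{0\le i,j\le n-1}\left(\int u^{i+j}\frac{\prod_{\ell=1}^m(u-x_\ell)}{\prod_{\ell=1}^k(u-y_\ell)}\,d\mu(u)\right)$$ does not vanish identically.
   Context: $\int f(u)\,d\mu(u)$ denotes $L(f)$; the factors $\frac1{u-y_\ell}$ are expanded as $-\sum_{i\ge0}u^iy_\ell^{-i-1}$ (formal power series in $1/y_\ell$) and $L$ is applied coefficientwise, so the determinant is a formal series in $x_1,\dots,x_m$ and $1/y_1,\dots,1/y_k$ (alternatively the integrals may be read analytically for a measure $d\mu$). *)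

(* Defs.v *)
(* Formal power series in N variables over a ring R are
   represented by their coefficient functions (multi-index -> R). *)
From HB Require Import structures.
From mathcomp Require Import all_boot all_order all_algebra all_fingroup.
Set Implicit Arguments. Unset Strict Implicit. Unset Printing Implicit Defensive.
Import Order.TTheory GRing.Theory Num.Theory.
Local Open Scope ring_scope.

Definition mon (N : nat) := 'I_N -> nat.
Definition series (R : Type) (N : nat) := mon N -> R.

Definition mon_bnd N (a : mon N) : nat := (\max_(j < N) a j)%N.

Section Series.
Variables (R : nzRingType) (N : nat).
Implicit Types (f g : series R N) (a : mon N).

Definition sconst (c : R) : series R N :=
  fun a => if [forall j, a j == 0%N] then c else 0.
Definition svar (t : 'I_N) : series R N :=
  fun a => if [forall j, a j == (j == t : nat)] then 1 else 0.
Definition sadd f g : series R N := fun a => f a + g a.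
Definition sopp f : series R N := fun a => - f a.
(* Cauchy product: coefficient at a is the sum over b <= a of f_b g_(a-b) *)
Definition smul f g : series R N := fun a =>
  \sum_(b : {ffun 'I_N -> 'I_(mon_bnd a).+1} | [forall j, (b j <= a j)%N])
     f (fun j => nat_of_ord (b j)) * g (fun j => (a j - b j)%N).
Definition sprod (s : seq (series R N)) : series R N := foldr smul (sconst 1) s.
End Series.

Definition Lfun (K : fieldType) (mu : nat -> K) (p : {poly K}) : K :=
  \sum_(s < size p) p`_s * mu s.

Definition hankel (K : fieldType) (mu : nat -> K) (n : nat) : K :=
  \det (\matrix_(i < n, j < n) mu (i + j)%N).

Section Integrand.
Variables (K : fieldType) (m k : nat).
Local Notation N := (m + k)%N.
(* variables: x_l = variable lshift k l ; z_l := 1/y_l = variable rshift m l *)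
Definition xvar (l : 'I_m) : 'I_N := lshift k l.
Definition zvar (l : 'I_k) : 'I_N := rshift m l.

Definition lin_factor (l : 'I_m) : series {poly K} N :=
  sadd (@sconst _ N 'X) (sopp (@svar {poly K} N (xvar l))).
(* the expansion 1/(u - y_l) = - sum_{i>=0} u^i y_l^{-i-1} = - sum_i u^i z_l^{i+1} *)
Definition inv_factor (l : 'I_k) : series {poly K} N := fun a =>
  if [forall t, (t != zvar l) ==> (a t == 0%N)] && (0 < a (zvar l))%N
  then - 'X^((a (zvar l)).-1) else 0.

Definition integrand (i j : nat) : series {poly K} N :=
  smul (@sconst _ N ('X^(i + j)))
       (smul (sprod [seq lin_factor l | l <- enum 'I_m])
             (sprod [seq inv_factor l | l <- enum 'I_k])).

Definition moment_entry (mu : nat -> K) (i j : nat) : series K N :=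
  fun a => Lfun mu (integrand i j a).

Definition sdet (n : nat) (A : 'I_n -> 'I_n -> series K N) : series K N :=
  fun a => \sum_(s : 'S_n) (-1) ^+ s * sprod [seq A i (s i) | i <- enum 'I_n] a.
End Integrand.

(* Main.v *)
Require Import Defs.
From HB Require Import structures.
From mathcomp Require Import all_boot all_order all_algebra all_fingroup.
From mathcomp Require Import zify.
From Stdlib Require Import FunctionalExtensionality.
Set Implicit Arguments. Unset Strict Implicit. Unset Printing Implicit Defensive.
Import Order.TTheory GRing.Theory Num.Theory.
Local Open Scope ring_scope.

Section Gen.
Variables (R : nzRingType) (N : nat) (P : pred 'I_N).

Definition bdd (B a : mon N) : bool :=
  [forall j, if P j then (a j <= B j)%N else (B j <= a j)%N].
Definition Bdd (f : series R N) (B : mon N) := forall a, ~~ bdd B a -> f a = 0.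

Lemma smul_Bdd f g B1 B2 B : (forall j, B j = B1 j + B2 j)%N ->
  Bdd f B1 -> Bdd g B2 -> Bdd (smul f g) B.
Proof.
move=> HB hf hg a nb; rewrite /smul big1 // => b /forallP hba.
case b1: (bdd B1 (fun j => nat_of_ord (b j))); last by rewrite hf ?b1 // mul0r.
case b2: (bdd B2 (fun j => a j - b j)%N); last by rewrite (hg _) ?b2 // mulr0.
exfalso; move/negP: nb; apply; apply/forallP => j.
move/forallP/(_ j): b1; move/forallP/(_ j): b2; have := hba j; rewrite HB.
case: (P j) => /=; lia.
Qed.

Lemma smul_val f g B1 B2 B : (forall j, B j = B1 j + B2 j)%N ->
  Bdd f B1 -> Bdd g B2 -> smul f g B = f B1 * g B2.
Proof.
move=> HB hf hg; rewrite /smul.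
have hle j : (B1 j < (mon_bnd B).+1)%N.
  by rewrite ltnS (leq_trans _ (@leq_bigmax _ B j)) // HB leq_addr.
pose b0 : {ffun 'I_N -> 'I_(mon_bnd B).+1} := [ffun j => Ordinal (hle j)].
rewrite (bigD1 b0) /=; last by apply/forallP => j; rewrite ffunE /= HB leq_addr.
rewrite big1 ?addr0.
  congr (f _ * g _); apply: functional_extensionality => j; rewrite ffunE //=.
  rewrite HB; lia.
move=> b /andP [/forallP hba hne].
case b1: (bdd B1 (fun j => nat_of_ord (b j))); last by rewrite hf ?b1 // mul0r.
case b2: (bdd B2 (fun j => B j - b j)%N); last by rewrite (hg _) ?b2 // mulr0.
exfalso; move/eqP: hne; apply; apply/ffunP => j; apply/val_inj; rewrite ffunE /=.
move/forallP/(_ j): b1; move/forallP/(_ j): b2; have := hba j; rewrite HB.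
case: (P j) => /=; lia.
Qed.

Lemma sprod_Bdd (I : Type) (s : seq I) (F : I -> series R N) (B : I -> mon N) :
 (forall i, Bdd (F i) (B i)) ->
 Bdd (sprod [seq F i | i <- s]) (fun j => \sum_(i <- s) B i j)%N /\
 sprod [seq F i | i <- s] (fun j => \sum_(i <- s) B i j)%N = \prod_(i <- s) F i (B i).
Proof.
move=> hF; elim: s => [|x s [IHb IHv]].
  rewrite /sprod /= big_nil; split.
    move=> a; rewrite /sconst; case: ifP => // /forallP h /negP []. 
    apply/forallP => j; rewrite big_nil /=.
    by case: (P j) => //; rewrite (eqP (h j)).
  rewrite /sconst; case: ifP => // /negP []; apply/forallP => j.
  by rewrite big_nil.
have HB j : (\sum_(i <- x :: s) B i j = B x j + \sum_(i <- s) B i j)%N.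
  by rewrite big_cons.
split; first exact: (smul_Bdd HB (hF x) IHb).
rewrite big_cons -IHv; exact: (smul_val HB (hF x) IHb).
Qed.

End Gen.

Lemma prod_m1 (R : nzRingType) (I : Type) (s : seq I) :
  \prod_(i <- s) (-1 : R) = (-1) ^+ size s.
Proof. by elim: s => [|x s IH]; rewrite ?big_nil ?big_cons ?IH ?exprS. Qed.

Section Conc.
Variables (K : fieldType) (m k : nat).
Let N := (m + k)%N.
Let P : pred 'I_(m + k) := fun j => (j < m)%N.

Lemma sconst_Bdd (R : nzRingType) (c : R) : Bdd P (@sconst R (m + k) c) (fun _ => 0%N).
Proof.
move=> a /forallPn [j hj]; rewrite /sconst; case: ifP => // /forallP h.
by move: hj; rewrite (eqP (h j)); case: (P j).
Qed.

Lemma sconst0 (R : nzRingType) (c : R) : @sconst R (m + k) c (fun _ => 0%N) = c.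
Proof. by rewrite /sconst; case: ifP => // /negP []; apply/forallP. Qed.

Definition ex (l : 'I_m) : mon (m + k) := fun j => nat_of_bool (j == xvar k l).
Definition ez (l : 'I_k) : mon (m + k) := fun j => nat_of_bool (j == zvar m l).

Lemma lin_Bdd l : Bdd P (lin_factor K l) (ex l).
Proof.
move=> a /forallPn [j]; rewrite /P /ex /lin_factor /sadd /sopp /sconst /svar.
have hx : ((xvar k l : nat) < m)%N by rewrite /xvar /= ltn_ord.
case hj: (j < m)%N; rewrite -ltnNge => hlt.
  rewrite ifF; last first.
    by apply/negP => /forallP /(_ j) /eqP h; move: hlt; rewrite h.
  rewrite ifF ?oppr0 ?addr0 //.
  by apply/negP => /forallP /(_ j) /eqP h; move: hlt; rewrite h ltnn.
exfalso; move: hlt; case: eqP => [e|]; last by [].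
by move: hj; rewrite e hx.
Qed.

Lemma lin_val l : lin_factor K l (ex l) = -1.
Proof.
rewrite /lin_factor /sadd /sopp /sconst /svar /ex.
rewrite ifF; last by apply/negP => /forallP /(_ (xvar k l)); rewrite eqxx.
rewrite ifT ?add0r //; by apply/forallP.
Qed.

Lemma inv_Bdd l : Bdd P (inv_factor K l) (ez l).
Proof.
move=> a /forallPn [j]; rewrite /P /ez /inv_factor.
have hz : ~~ ((zvar m l : nat) < m)%N by rewrite /zvar /= -leqNgt leq_addr.
case hj: (j < m)%N; rewrite -ltnNge => hlt.
  have hne : j != zvar m l by apply: contraNneq hz => <-.
  rewrite ifF //; apply/negP => /andP [/forallP /(_ j)]; rewrite hne /=.
  by move=> /eqP h; move: hlt; rewrite h (negbTE hne).
move: hlt; case: eqP => [e|]; last by [].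
rewrite -e ltnS leqn0 => /eqP ->; by rewrite andbF.
Qed.

Lemma inv_val l : inv_factor K l (ez l) = -1.
Proof.
rewrite /inv_factor /ez ifT; first by rewrite eqxx expr0.
rewrite eqxx andbT; apply/forallP => t; apply/implyP => h.
by rewrite (negbTE h).
Qed.

Definition Tb : mon (m + k) := fun t =>
  (0 + ((\sum_(l <- enum 'I_m) ex l t) + \sum_(l <- enum 'I_k) ez l t))%N.

Lemma integrand_Bdd i j : Bdd P (@integrand K m k i j) Tb.
Proof.
have [h1 _] := sprod_Bdd (P:=P) (enum 'I_m) lin_Bdd.
have [h2 _] := sprod_Bdd (P:=P) (enum 'I_k) inv_Bdd.
apply: (smul_Bdd (B1 := fun _ => 0%N)) => //; first exact: sconst_Bdd.
exact: (smul_Bdd _ h1 h2).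
Qed.

Lemma integrand_val i j : @integrand K m k i j Tb =
  'X^(i + j) * ((-1) ^+ size (enum 'I_m) * (-1) ^+ size (enum 'I_k)).
Proof.
have [h1 v1] := sprod_Bdd (P:=P) (enum 'I_m) lin_Bdd.
have [h2 v2] := sprod_Bdd (P:=P) (enum 'I_k) inv_Bdd.
rewrite /integrand (smul_val (B1 := fun _ => 0%N) _ (sconst_Bdd _)
  (smul_Bdd (fun _ => erefl) h1 h2)) // sconst0.
rewrite (smul_val (fun _ => erefl) h1 h2) v1 v2.
rewrite (eq_bigr (fun _ => -1)) => [|l _]; last exact: lin_val.
rewrite [X in _ * (_ * X)](eq_bigr (fun _ => -1)) => [|l _]; last exact: inv_val.
by rewrite !prod_m1.
Qed.
End Conc.

Lemma Lfun_widen (K : fieldType) (mu : nat -> K) (p : {poly K}) M :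
  (size p <= M)%N -> Lfun mu p = \sum_(s < M) p`_s * mu s.
Proof.
move=> h; rewrite /Lfun (big_ord_widen M (fun s => p`_s * mu s) h) big_mkcond.
apply: eq_bigr => i _; case: ltnP => // h2; by rewrite nth_default // mul0r.
Qed.

Lemma Lfun_XnC (K : fieldType) (mu : nat -> K) d (c : K) :
  Lfun mu ('X^d * c%:P) = c * mu d.
Proof.
rewrite (@Lfun_widen _ _ _ d.+1); last first.
  by rewrite mulrC mul_polyC (leq_trans (size_scale_leq _ _)) // size_polyXn.
rewrite big_ord_recr /= big1 ?add0r => [|i _].
  by rewrite coefMC coefXn eqxx mul1r.
by rewrite coefMC coefXn ltn_eqF // mul0r mul0r.
Qed.

Section Conc2.
Variables (K : fieldType) (m k : nat) (mu : nat -> K).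
Let P : pred 'I_(m + k) := fun j => (j < m)%N.
Let c : K := (-1) ^+ size (enum 'I_m) * (-1) ^+ size (enum 'I_k).

Lemma moment_Bdd i j : Bdd P (@moment_entry K m k mu i j) (@Tb m k).
Proof.
move=> a na; rewrite /moment_entry (@integrand_Bdd K m k i j a na).
by rewrite /Lfun size_poly0 big_ord0.
Qed.

Lemma moment_val i j : @moment_entry K m k mu i j (@Tb m k) = c * mu (i + j)%N.
Proof.
rewrite /moment_entry (integrand_val K m k) -Lfun_XnC; congr (Lfun _ (_ * _)).
by rewrite /c rmorphM /= !rmorphXn /= rmorphN1.
Qed.
End Conc2.

Theorem lemma10 (K : fieldType) (mu : nat -> K)
  (char0 : [pchar K] =i pred0)
  (hank : forall n : nat, hankel mu n != 0)
  (k m n : nat) :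
  exists a : mon (m + k),
    sdet (fun i j : 'I_n => @moment_entry K m k mu i j) a != 0.
Proof.
set c : K := (-1) ^+ size (enum 'I_m) * (-1) ^+ size (enum 'I_k).
exists (fun t => \sum_(i <- enum 'I_n) @Tb m k t)%N.
rewrite /sdet.
have key (s : 'S_n) : sprod [seq @moment_entry K m k mu (@nat_of_ord n i) (s i) | i <- enum 'I_n]
    (fun t => \sum_(i <- enum 'I_n) @Tb m k t)%N
    = \prod_(i <- enum 'I_n) (c * mu (@nat_of_ord n i + s i)%N).
  have [_ ->] := sprod_Bdd (P := fun j : 'I_(m + k) => (j < m)%N) (enum 'I_n)
     (F := fun i => @moment_entry K m k mu i (s i)) (B := fun _ => @Tb m k)
     (fun i => moment_Bdd mu i (s i)).
  by apply: eq_bigr => i _; rewrite moment_val.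
rewrite (eq_bigr (fun s : 'S_n => (-1) ^+ s * \prod_(i <- enum 'I_n) (c * mu (@nat_of_ord n i + s i)%N)));
  last by move=> s _; rewrite key.
have -> : \sum_(s : 'S_n) (-1) ^+ s * \prod_(i <- enum 'I_n) (c * mu (@nat_of_ord n i + s i)%N)
   = \det (c *: \matrix_(i < n, j < n) mu (i + j)%N).
  rewrite /determinant; apply: eq_bigr => s _; congr (_ * _).
  rewrite big_enum /=; apply: eq_big => // i _; by rewrite !mxE.
rewrite detZ mulf_neq0 ?expf_neq0 //; last exact: hank.
by rewrite /c mulf_neq0 // expf_neq0 // oppr_eq0 oner_eq0.
Qed.
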